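(* Let $b>1$, $\gamma>0$ and $x_0\ge e$ be constants, and let $\zeta$ be a random variable whose tail function satisfies $$T_\zeta(x)=x^{-b}(\ln x)^{\gamma}\qquad\text{for all } x\ge x_0.$$ Then $|\zeta|_p\asymp (b-p)^{-(\gamma+1)/b}$ for $p\in[1,b)$ (i.e. the ratio of the two sides is bounded above and below by positive finite constants on $[1,b)$). Consequently $\zeta$ belongs to the space $G\psi^{b,\gamma+1}$, but $\|\zeta\|G\psi^{b,\gamma}=\infty$, where $\psi^{b,\delta}(p)=(b-p)^{-\delta/b}$, $p\in[1,b)$.
   Context: All random variables are defined on a probability space $(\Omega,F,\mathbf P)$. For $p\ge 1$, $|f|_p=(\mathbf E|f|^p)^{1/p}$. Given a positive continuous function $\psi$ on $[1,b)$, the Grand Lebesgue Space $G\psi$ consists of all random variables $f$ with finite norm $\|f\|G\psi=\sup_{p\in[1,b)}|f|_p/\psi(p)$. The tail function of a random variable $\xi$ is $T_\xi(x)=\max(\mathbf P(\xi\ge x),\mathbf P(\xi\le -x))$, $x\ge0$. *)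

(* Defs.v *)
From HB Require Import structures.
From mathcomp Require Import all_boot all_order all_algebra.
From mathcomp Require Import all_classical all_reals all_analysis.
Set Implicit Arguments. Unset Strict Implicit. Unset Printing Implicit Defensive.
Import Order.TTheory GRing.Theory Num.Theory.
Local Open Scope classical_set_scope.
Local Open Scope ring_scope.

Definition pnorm {d} {T : measurableType d} {R : realType}
  (P : probability T R) (f : T -> R) (p : R) : \bar R :=
  Lnorm P p%:E (EFin \o f).

Definition tailfun {d} {T : measurableType d} {R : realType}
  (P : probability T R) (xi : T -> R) (x : R) : \bar R :=
  maxe (P [set w | x <= xi w]) (P [set w | xi w <= - x]).

Definition psi {R : realType} (b delta p : R) : R :=
  (b - p) `^ (- (delta / b)).

Definition GLSnorm {d} {T : measurableType d} {R : realType}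
  (P : probability T R) (psi : R -> R) (b : R) (f : T -> R) : \bar R :=
  ereal_sup [set (pnorm P f p * ((psi p)^-1)%:E)%E | p in `[1, b[%classic].

(* Main.v *)
Require Import Defs.
From HB Require Import structures.
From mathcomp Require Import all_boot all_order all_algebra.
From mathcomp Require Import all_classical all_reals all_analysis.
From mathcomp Require Import ring lra.
From mathcomp Require Import measurable_realfun.
Import Order.TTheory GRing.Theory Num.Theory.
Local Open Scope classical_set_scope.
Local Open Scope ring_scope.

Section RealLemmas.
Variable R : realType.
Implicit Types a t u x y g : R.

Lemma powRE a x : 0 < a -> a `^ x = expR (x * ln a).
Proof. by move=> a0; rewrite /powR gt_eqF. Qed.

Lemma tpow_le_exp g t : 0 < g -> 0 <= t -> t `^ g <= (2*g) `^ g * expR (t/2).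
Proof.
move=> g0; rewrite le_eqVlt => /predU1P[<-|t0].
  by rewrite powR0 ?gt_eqF// mulr_ge0// ?powR_ge0 ?expR_ge0.
rewrite !powRE ?mulr_gt0// -expRD ler_expR.
have h : ln (t / (2*g)) < t / (2*g) by apply: ln_sublinear; rewrite divr_gt0// mulr_gt0.
rewrite ln_div ?posrE ?mulr_gt0// in h.
have : g * (ln t - ln (2 * g)) <= g * (t / (2 * g)) by rewrite ler_pM2l// ltW.
have -> : g * (t / (2 * g)) = t / 2 by field; rewrite gt_eqF.
lra.
Qed.
End RealLemmas.

Section RealLemmas2.
Variable R : realType.
Lemma lnpow_le (g t : R) : 0 < g -> 0 < t -> g * ln t <= g * ln (2*g) + t/2.
Proof.
move=> g0 t0.
have h : ln (t / (2*g)) < t / (2*g) by apply: ln_sublinear; rewrite divr_gt0// mulr_gt0.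
rewrite ln_div ?posrE ?mulr_gt0// in h.
have : g * (ln t - ln (2 * g)) <= g * (t / (2 * g)) by rewrite ler_pM2l// ltW.
have -> : g * (t / (2 * g)) = t / 2 by field; rewrite gt_eqF.
lra.
Qed.
End RealLemmas2.

Section Gen.
Variable R : realType.

Lemma nneseries_le_bound (u : nat -> \bar R) (M : \bar R) :
  (forall n, (0 <= u n)%E) -> (forall n, (\sum_(0 <= i < n) u i <= M)%E) ->
  (\sum_(i <oo) u i <= M)%E.
Proof.
move=> u0 uM; apply: lime_le.
  by apply: is_cvg_ereal_nneg_natsum => n _; exact: u0.
by apply: nearW => n; exact: uM.
Qed.

Lemma telesc_le (a c : nat -> R) (t : R) M :
  (forall k, a k <= a k.+1) -> 0 <= a 0%N -> 0 <= t ->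
  (forall k, c k = 0 \/ (c k = 1 /\ a k.+1 <= t)) ->
  \sum_(0 <= k < M) (a k.+1 - a k) * c k <= t.
Proof.
move=> ai a0 t0 hc.
suff H : \sum_(0 <= k < M) (a k.+1 - a k) * c k <= a M - a 0%N /\
  (\sum_(0 <= k < M) (a k.+1 - a k) * c k <= t - a 0%N \/
   \sum_(0 <= k < M) (a k.+1 - a k) * c k = 0).
  by case: H => _ [] h; lra.
elim: M => [|M [ih1 ih2]]; first by rewrite big_geq//; lra.
rewrite big_nat_recr//=.
case: (hc M) => [->|[-> hM]].
  rewrite mulr0 addr0; split=> //; have := ai M; lra.
rewrite mulr1; split; first lra.
left; lra.
Qed.

Lemma geom_exp_le (c : R) n : 0 < c ->
  \sum_(0 <= k < n) expR (- (c * k%:R)) <= (1 + c) / c.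
Proof.
move=> c0.
have z0 : 0 < expR (- c) by apply: expR_gt0.
have z1 : expR (- c) < 1 by rewrite expR_lt1 oppr_lt0.
have -> : \sum_(0 <= k < n) expR (- (c * k%:R)) = series (geometric 1 (expR (- c))) n.
  rewrite /series /=; apply: eq_bigr => k _.
  by rewrite mul1r -expRM_natr mulNr.
apply: (le_trans (geometric_le_lim _ _ _ _)) => //; first by rewrite ger0_norm// ltW.
rewrite mul1r.
have h : 1 + c <= expR c by apply: expR_ge1Dx.
have hc : expR (- c) <= (1 + c)^-1 by rewrite expRN lef_pV2 ?posrE ?expR_gt0//; lra.
have h2 : c / (1 + c) <= 1 - expR (- c).
  have -> : c / (1 + c) = 1 - (1 + c)^-1 by field; lra.
  lra.
rewrite -[(1 + c) / c]invf_div lef_pV2 ?posrE ?divr_gt0//; lra.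
Qed.
End Gen.

Section V.
Variable R : realType.
Lemma termV (b g p L x : R) : 0 < g -> 1 <= L -> 0 <= x -> p < b -> 0 <= p ->
  expR (p * (L + x + 1)) * (2 * (expR (- b * (L + x)) * (L + x) `^ g)) <=
  expR (ln 2 + b + g * ln (2 * g) - g * ln (b - p)) * expR (- ((b - p) / 2 * x)).
Proof.
move=> g0 L1 x0 pb p0.
have s0 : 0 < b - p by lra.
have Lx : 0 < L + x by lra.
have h := @lnpow_le _ _ _ g0 (mulr_gt0 s0 Lx).
have hl : ln ((b-p) * (L+x)) = ln (b-p) + ln (L+x) by rewrite lnM ?posrE.
rewrite hl in h.
have e2 : (2:R) = expR (ln 2) by rewrite lnK// posrE.
rewrite powRE// {1}e2 -!expRD ler_expR.
set s := b - p in s0 h *.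
have -> : p = b - s by rewrite /s; ring.
have hsx : 0 <= s * x by rewrite mulr_ge0// ltW.
have hsL : 0 <= s * L by rewrite mulr_ge0//; lra.
rewrite (_ : s * (L + x) / 2 = s * L / 2 + s * x / 2) in h; last by ring.
have -> : (b - s) * (L + x + 1) + (ln 2 + (- b * (L + x) + g * ln (L + x)))
  = b - s + ln 2 - s * L - s * x + g * ln (L + x) by ring.
have -> : ln 2 + b + g * ln (2 * g) - g * ln s - s / 2 * x =
   ln 2 + b + g * ln (2 * g) - g * ln s - (s * x) / 2 by ring.
have hs : 0 <= s by lra.
rewrite mulrDr in h.
lra.
Qed.
End V.

Section TL.
Variable R : realType.
Lemma termL (b g p L Nr kr : R) : 0 < g -> 1 <= L -> 1 <= p -> p < b ->
  0 <= kr -> kr + 1 <= Nr -> (b - p)^-1 < Nr -> (b - p) * Nr <= 1 + (b - p) ->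
  (1 - expR (-1)) * expR (- b * (L + 2)) * expR (- g * ln (b - p)) <=
  (expR (p * (L + Nr + kr + 1)) - expR (p * (L + Nr + kr))) *
  (expR (- b * (L + Nr + kr + 1)) * (L + Nr + kr + 1) `^ g).
Proof.
move=> g0 L1 p1 pb k0 kN sN sN2.
have s0 : 0 < b - p by lra.
set s := b - p in s0 sN sN2 *.
set u := L + Nr + kr + 1.
have u0 : 0 < u by rewrite /u; lra.
have e : expR (p * (L + Nr + kr)) = expR (p * u) * expR (- p).
  by rewrite -expRD /u; congr expR; ring.
rewrite e powRE //.
have h1 : expR (- p) <= expR (-1) by rewrite ler_expR; lra.
have h2' : expR (-1) < 1 :> R by rewrite expR_lt1; lra.
have h2 : 0 <= 1 - expR (-1) :> R by lra.
have -> : (expR (p * u) - expR (p * u) * expR (- p)) * (expR (- b * u) * expR (g * ln u))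
   = (1 - expR (- p)) * expR (p * u + - b * u + g * ln u).
  by rewrite !expRD; ring.
rewrite -mulrA; apply: ler_pM; rewrite ?expR_ge0 ?mulr_ge0 //; first lra.
rewrite -expRD ler_expR.
have hus : 1 < u * s.
  have : 1 < Nr * s.
    by rewrite -(ltr_pdivrMr _ _ s0) div1r.
  have : Nr * s <= u * s by apply: ler_wpM2r; rewrite /u; lra.
  lra.
have hl : 0 <= ln u + ln s by rewrite -lnM ?posrE // ln_ge0 // ltW.
have hsu : s * u <= b * (L + 2).
  have -> : s * u = s * L + s * Nr + s * (kr + 1) by rewrite /u; ring.
  have : s * (kr + 1) <= s * Nr by apply: ler_wpM2l; [exact: ltW|lra].
  have : s * L <= b * L by apply: ler_wpM2r; rewrite /s; lra.
  rewrite /s in sN2 *; lra.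
have -> : p * u + - b * u + g * ln u = - (s * u) + g * (ln u + ln s) - g * ln s.
  by rewrite /s; ring.
have : 0 <= g * (ln u + ln s) by apply: mulr_ge0; [exact: ltW|].
lra.
Qed.
End TL.

Section PB.
Variable R : realType.
Lemma pow_bounds (b g p A B r : R) : 1 < b -> 0 < g -> 1 <= p -> p < b -> 0 < A -> 0 < B ->
  A * expR (- (g + 1) * ln (b - p)) <= r -> r <= B * expR (- (g + 1) * ln (b - p)) ->
  expR (- `|ln A| - (g + 1) * `|ln (b - 1)|) * (b - p) `^ (- ((g + 1) / b)) <= r `^ p^-1 /\
  r `^ p^-1 <= expR (`|ln B| + (g + 1)) * (b - p) `^ (- ((g + 1) / b)).
Proof.
move=> b1 g0 p1 pb A0 B0 hA hB.
have s0 : 0 < b - p by lra.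
have sb : b - p <= b - 1 by lra.
set s := b - p in s0 sb hA hB *.
have r0 : 0 < r by apply: lt_le_trans hA; rewrite mulr_gt0 ?expR_gt0.
set l := ln s.
have lrA : ln A - (g + 1) * l <= ln r.
  have := hA; rewrite -ler_ln ?posrE ?mulr_gt0 ?expR_gt0 // lnM ?posrE ?expR_gt0 // expRK.
  by rewrite mulNr.
have lrB : ln r <= ln B - (g + 1) * l.
  have := hB; rewrite -ler_ln ?posrE ?mulr_gt0 ?expR_gt0 // lnM ?posrE ?expR_gt0 // expRK.
  by rewrite mulNr.
have b0 : 0 < b by lra.
have p0 : 0 < p by lra.
set q := p^-1.
have q0 : 0 < q by rewrite invr_gt0.
have q1 : q <= 1 by rewrite invf_le1 //.
have bi : b^-1 < 1 by rewrite invf_lt1.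
have bi0 : 0 < b^-1 by rewrite invr_gt0.
set dl := q - b^-1.
have dlE : dl = s * (q * b^-1) by rewrite /dl /q /s; field; rewrite !gt_eqF.
have dl0 : 0 <= dl by rewrite dlE mulr_ge0 // ?mulr_ge0 // ltW.
have qb1 : q * b^-1 <= 1.
  have : q * b^-1 <= 1 * 1 by apply: ler_pM => //; [exact: ltW|exact: ltW|exact: ltW].
  by rewrite mulr1.
have dls : dl <= s by rewrite dlE -[X in _ <= X]mulr1 ler_wpM2l // ltW.
have dl1 : dl <= 1 by rewrite /dl; lra.
have lM : l <= `|ln (b - 1)|.
  apply: (le_trans _ (ler_norm _)); rewrite /l ler_ln ?posrE //; lra.
have hld : - 1 <= l * dl /\ l * dl <= `|ln (b - 1)|.
  have [l0|l0] := leP l 0.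
    have h1 : l * dl <= 0 by rewrite mulr_le0_ge0.
    have h2 : l * s <= l * dl by rewrite ler_wnM2l.
    have h3 : - 1 <= l * s.
      have := @ln_sublinear _ (s^-1) ltac:(rewrite invr_gt0 //).
      rewrite lnV ?posrE // -/l => h.
      have : - l * s <= s^-1 * s by rewrite ler_wpM2r // ltW.
      rewrite mulVf ?gt_eqF //; lra.
    have := normr_ge0 (ln (b - 1)).
    split; lra.
  have h1 : 0 <= l * dl by rewrite mulr_ge0 // ltW.
  have h2 : l * dl <= l * 1 by rewrite ler_wpM2l // ltW.
  split; lra.
case: hld => hld1 hld2.
have qlE : (g + 1) * (q * l) = (g + 1) / b * l + (g + 1) * (l * dl).
  by rewrite /dl; ring.
have hg1 : 0 <= g + 1 by lra.
have e1 : (g + 1) * (l * dl) <= (g + 1) * `|ln (b - 1)| by rewrite ler_wpM2l.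
have e2 : - (g + 1) <= (g + 1) * (l * dl).
  have := ler_wpM2l hg1 hld1; rewrite mulrN1 //.
rewrite !powRE // -!expRD !ler_expR -/l.
have qA : - `|ln A| <= q * ln A.
  have [lA|lA] := leP 0 (ln A).
    have : 0 <= q * ln A by rewrite mulr_ge0 // ltW.
    have := normr_ge0 (ln A); lra.
  rewrite ltr0_norm // opprK -[X in X <= _]mul1r ler_wnM2r //; exact: ltW.
have qB : q * ln B <= `|ln B|.
  have [lB|lB] := leP 0 (ln B).
    rewrite ger0_norm // -[X in _ <= X]mul1r ler_wpM2r //.
  have : q * ln B <= 0 by rewrite mulr_ge0_le0 // ?ltW.
  have := normr_ge0 (ln B); lra.
have hq1 : q * (ln A - (g + 1) * l) <= q * ln r by rewrite ler_wpM2l // ltW.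
have hq2 : q * ln r <= q * (ln B - (g + 1) * l) by rewrite ler_wpM2l // ltW.
have eA : q * (ln A - (g + 1) * l) = q * ln A - (g + 1) * (q * l) by ring.
have eB : q * (ln B - (g + 1) * l) = q * ln B - (g + 1) * (q * l) by ring.
rewrite eA in hq1; rewrite eB in hq2.
have -> : - ((g + 1) / b) * l = - ((g + 1) / b * l) by ring.
split; lra.
Qed.
End PB.

Section Main.
Context d (T : measurableType d) (R : realType) (P : probability T R)
  (zeta : {RV P >-> R}) (b gamma x0 : R) (hb : 1 < b) (hg : 0 < gamma)
  (hx0 : expR 1 <= x0)
  (htail : forall x, x0 <= x ->
     tailfun P zeta x = (x `^ (- b) * ln x `^ gamma)%:E).

Let L := ln x0.
Lemma x0_gt0 : 0 < x0.
Proof. exact: lt_le_trans (expR_gt0 1) hx0. Qed.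
Lemma L_ge1 : 1 <= L.
Proof.
by rewrite /L -[X in X <= _](expRK 1) ler_ln ?posrE ?expR_gt0 ?x0_gt0.
Qed.
Lemma x0E : x0 = expR L.
Proof. by rewrite /L lnK// posrE x0_gt0. Qed.

Definition Ev (u : R) := [set w | expR u <= `|zeta w|].

Lemma mzeta : measurable_fun setT zeta.
Proof. exact: measurable_funPT. Qed.

Lemma mnorm : measurable_fun setT (fun w => `|zeta w|).
Proof. by apply: measurableT_comp; [exact: measurable_realfun.normr_measurable|exact: mzeta]. Qed.

Lemma mle (f g : T -> R) : measurable_fun setT f -> measurable_fun setT g ->
  measurable [set w | f w <= g w].
Proof. by move=> mf mg; rewrite -[X in measurable X]setTI; apply: measurable_fun_le. Qed.

Lemma mEv u : measurable (Ev u).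
Proof. by apply: mle => //; exact: mnorm. Qed.

Lemma tail_bounds u : L <= u ->
  ((expR (- b * u) * u `^ gamma)%:E <= P (Ev u))%E /\
  (P (Ev u) <= (2 * (expR (- b * u) * u `^ gamma))%:E)%E.
Proof.
move=> Lu.
have hx : x0 <= expR u by rewrite x0E ler_expR.
have := @htail _ hx; rewrite /tailfun -expRM expRK [u * _]mulrC => ht.
have mA : measurable [set w | expR u <= zeta w] by apply: mle => //; exact: mzeta.
have mB : measurable [set w | zeta w <= - expR u].
  by apply: mle => //; exact: mzeta.
split.
  rewrite -ht ge_max; apply/andP; split; apply: le_measure; rewrite ?inE//; try exact: mEv.
    by move=> w /= h; rewrite /Ev /= (le_trans h)// ler_norm.
  by move=> w /= h; rewrite /Ev /= ler_normr lerNr h orbT.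
have sub : Ev u `<=` [set w | expR u <= zeta w] `|` [set w | zeta w <= - expR u].
  move=> w; rewrite /Ev /=; case: (lerP 0 (zeta w)) => h.
    by rewrite ger0_norm// => ?; left.
  by rewrite ltr0_norm// => ?; right; rewrite lerNr.
apply: (le_trans (le_measure _ _ _ sub)); rewrite ?inE//; first exact: mEv.
  exact: measurableU.
apply: (le_trans (measureU2 _ mA mB)).
rewrite (_ : 2 * _ = expR (- b * u) * u `^ gamma + expR (- b * u) * u `^ gamma); last by ring.
rewrite EFinD -ht; apply: leeD; by rewrite le_max lexx ?orbT.
Qed.

Lemma pnormE p : pnorm P zeta p =
  ((\int[P]_w (`|zeta w| `^ p)%:E) `^ p^-1)%E.
Proof.
rewrite /pnorm Lnorm.unlock /=; congr (_ `^ _)%E.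
Qed.

Lemma mfp p : measurable_fun setT (fun w => (`|zeta w| `^ p)%:E).
Proof.
apply/measurable_realfun.measurable_EFinP.
exact: (measurableT_comp (measurable_powR p) mnorm).
Qed.

Lemma mterm (c u : R) : measurable_fun setT (fun w => (c * \1_(Ev u) w)%:E).
Proof.
apply/measurable_realfun.measurable_EFinP.
apply: measurable_realfun.measurable_funM => //.
exact: measurable_realfun.measurable_indic (mEv u).
Qed.

Lemma pw_upper p (p0 : 0 <= p) w :
  ((`|zeta w| `^ p)%:E <= (x0 `^ p)%:E +
    \sum_(k <oo) ((expR (p * (L + k%:R + 1)) * \1_(Ev (L + k%:R)) w)%:E))%E.
Proof.
have t0 : forall k, (0 <= (expR (p * (L + k%:R + 1)) * \1_(Ev (L + k%:R)) w)%:E)%E.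
  by move=> k; rewrite lee_fin mulr_ge0 ?expR_ge0.
have [y0|y0] := ltP `|zeta w| x0.
  apply: (le_trans _ (leeDl _ (nneseries_ge0 _))) => //.
  rewrite lee_fin; apply: ge0_ler_powR => //; rewrite ?nnegrE ?ltW ?x0_gt0 //.
have yp : 0 < `|zeta w| by apply: lt_le_trans x0_gt0 y0.
set u := ln `|zeta w|.
have Lu : L <= u by rewrite /L /u ler_ln// ?posrE// x0_gt0.
set k := Num.truncn (u - L).
have hk1 : k%:R <= u - L by rewrite truncn_le; lra.
have hk2 : u - L < k.+1%:R by apply: truncnS_gt.
apply: (le_trans _ (leeDr _ _)); last by rewrite lee_fin powR_ge0.
apply: (le_trans _ (nneseries_lim_ge k.+1 _)); last by move=> *; exact: t0.
rewrite big_nat_recr//=.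
apply: (le_trans _ (leeDr _ _)); last by apply: sume_ge0 => *; exact: t0.
have hE : Ev (L + k%:R) w by rewrite /Ev /= -[X in _ <= X](lnK (x:=`|zeta w|)) ?posrE// ler_expR -/u; lra.
rewrite indicE mem_set// mulr1 lee_fin powRE// ler_expR -/u.
rewrite -natr1 in hk2; rewrite ler_wpM2l //; lra.
Qed.

Definition C0 := expR (ln 2 + b + gamma * ln (2 * gamma)).
Definition Bc := expR (b * L + (gamma + 1) * ln b) + C0 * (2 + b).

Lemma int_upper p : 1 <= p -> p < b ->
  (\int[P]_w (`|zeta w| `^ p)%:E <= (Bc * expR (- (gamma + 1) * ln (b - p)))%:E)%E.
Proof.
move=> p1 pb.
have s0 : 0 < b - p by lra.
have p0 : 0 <= p by lra.
set s := b - p in s0 *.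
have L1 := L_ge1.
pose f k w := (expR (p * (L + k%:R + 1)) * \1_(Ev (L + k%:R)) w)%:E.
have f0 : forall k w, setT w -> (0 <= f k w)%E.
  by move=> k w _; rewrite lee_fin mulr_ge0 ?expR_ge0.
have mf : forall k, measurable_fun setT (f k) by move=> k; exact: mterm.
have mser : measurable_fun setT (fun w => \sum_(k <oo) f k w)%E.
  by have := @ge0_emeasurable_sum _ T R setT f xpredT (fun k w h _ => f0 k w h) (fun k _ => mf k).
apply: (le_trans (@ge0_le_integral _ _ _ P setT measurableT _ (fun w => ((x0 `^ p)%:E + \sum_(k <oo) f k w)%E) _ (mfp p) _ _)) => //.
- by apply: emeasurable_funD => //; exact: measurable_cst.
- by move=> w _; exact: pw_upper.
rewrite ge0_integralD //; last first.
- by move=> w _; apply: nneseries_ge0 => k _ _; exact: f0.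
- by move=> w _; rewrite lee_fin powR_ge0.
rewrite integral_cst //.
rewrite (_ : ((x0 `^ p)%:E * _)%E = (x0 `^ p)%:E); last first.
  by rewrite -[RHS]mule1; congr (_ * _)%E; exact: probability_setT.
rewrite integral_nneseries //.
have hterm : forall k, (\int[P]_(w in setT) f k w <=
    (C0 * expR (- gamma * ln s) * expR (- (s / 2 * k%:R)))%:E)%E.
  move=> k.
  have hneg : (expR (p * (L + k%:R + 1)) < 0) -> Ev (L + k%:R) = set0.
    by move=> h; exfalso; have := expR_ge0 (p * (L + k%:R + 1)); lra.
  rewrite /f (integralZl_indic _ (fun _ => Ev (L + k%:R)) _ hneg (mEv _)) //.
  rewrite integral_indic ?setIT //; last exact: mEv.
  have [_ hu] := tail_bounds (L + k%:R) ltac:(rewrite lerDl; exact: ler0n).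
  apply: (le_trans (lee_pmul _ _ (lexx _) hu)) => //. 
  rewrite -EFinM lee_fin.
  have := @termV _ b gamma p L k%:R hg L1 (ler0n _ k) pb p0.
  move=> h; apply: (le_trans h); apply: ler_wpM2r; first exact: expR_ge0.
  by rewrite /C0 -expRD mulNr -/s.
have hser : (\sum_(n <oo) \int[P]_(w in setT) f n w <=
    (C0 * expR (- gamma * ln s) * ((1 + s / 2) / (s / 2)))%:E)%E.
  apply: nneseries_le_bound => n.
    by apply: integral_ge0 => w _; exact: f0.
  apply: (le_trans (lee_sum _ (fun i _ => hterm i))).
  rewrite sumEFin lee_fin -mulr_sumr ler_wpM2l ?mulr_ge0 ?expR_ge0//.
  by apply: geom_exp_le; rewrite divr_gt0.
apply: (le_trans (leeD (lexx _) hser)).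
rewrite -EFinD lee_fin /Bc [X in _ <= X]mulrDl.
apply: lerD.
  have x0p : x0 `^ p = expR (p * L) by rewrite powRE ?x0_gt0.
  rewrite x0p -expRD ler_expR.
  have sb : s <= b by rewrite /s; lra.
  have b0 : 0 < b by lra.
  have hls : ln s <= ln b by rewrite ler_ln ?posrE.
  have hpL : p * L <= b * L by apply: ler_wpM2r; lra.
  have hg1 : 0 <= gamma + 1 by rewrite addr_ge0 // ltW.
  have hd : 0 <= ln b - ln s by lra.
  have := mulr_ge0 hg1 hd.
  rewrite mulrBr; lra.
have -> : expR (- (gamma + 1) * ln s) = expR (- gamma * ln s) * s^-1.
  have -> : s^-1 = expR (- ln s) by rewrite expRN lnK // posrE.
  by rewrite -expRD; congr expR; ring.
have -> : (1 + s / 2) / (s / 2) = (2 + s) * s^-1 by field; rewrite gt_eqF.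
have -> : C0 * (2 + b) * (expR (- gamma * ln s) / s) = C0 * expR (- gamma * ln s) * ((2 + b) / s) by ring.
apply: ler_wpM2l; first by rewrite mulr_ge0 ?expR_ge0.
apply: ler_wpM2r; first by rewrite invr_ge0 ltW.
rewrite /s; lra.
Qed.

Definition Ac := (1 - expR (-1)) * expR (- b * (L + 2)).

Lemma int_lower p : 1 <= p -> p < b ->
  ((Ac * expR (- (gamma + 1) * ln (b - p)))%:E <= \int[P]_w (`|zeta w| `^ p)%:E)%E.
Proof.
move=> p1 pb.
have s0 : 0 < b - p by lra.
have p0 : 0 <= p by lra.
have L1 := L_ge1.
have sb1 : b - p <= b - 1 by lra.
set s := b - p in s0 sb1 *.
set N := (Num.truncn (s^-1)).+1.
have si0 : 0 <= s^-1 by rewrite invr_ge0 ltW.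
have hN1 : s^-1 < N%:R by apply: truncnS_gt.
have hN2 : s * N%:R <= 1 + s.
  have : N%:R <= s^-1 + 1 by rewrite /N -natr1 lerD2r truncn_le.
  move=> h; have := ler_wpM2l (ltW s0) h.
  by rewrite mulrDr mulfV ?gt_eqF // mulr1.
pose a k := expR (p * (L + N%:R + k%:R)).
have amono : forall k, a k <= a k.+1.
  by move=> k; rewrite /a ler_expR; apply: ler_wpM2l => //; rewrite -natr1; lra.
pose g k w := ((a k.+1 - a k) * \1_(Ev (L + N%:R + k.+1%:R)) w)%:E.
have g0 : forall k w, (0 <= g k w)%E.
  by move=> k w; rewrite lee_fin mulr_ge0 // subr_ge0.
have pw : forall w, setT w -> (\sum_(0 <= k < N) g k w <= (`|zeta w| `^ p)%:E)%E.
  move=> w _; rewrite sumEFin lee_fin.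
  apply: (@telesc_le _ a (fun k => \1_(Ev (L + N%:R + k.+1%:R)) w)) => //.
  - exact: expR_ge0.
  move=> k; rewrite indicE; case: (boolP (w \in Ev _)) => h; [right|left] => //.
  split => //.
  move: h; rewrite inE /Ev /= => h.
  have zp : 0 < `|zeta w| by apply: lt_le_trans (expR_gt0 _) h.
  rewrite /a powRE // ler_expR ler_wpM2l //.
  by rewrite -ler_expR lnK ?posrE.
apply: (le_trans _ (@ge0_le_integral _ _ _ P setT measurableT (fun w => \sum_(0 <= k < N) g k w)%E _ _ _ (mfp p) pw)); last first.
- by apply: emeasurable_sum => k; exact: mterm.
- by move=> w _; apply: sume_ge0 => k _; exact: g0.
rewrite ge0_integral_sum //; last by move=> k; exact: mterm.
have hterm : forall k, (k < N)%N ->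
    ((Ac * expR (- gamma * ln s))%:E <= \int[P]_(w in setT) g k w)%E.
  move=> k kN.
  have c0 : 0 <= a k.+1 - a k by rewrite subr_ge0.
  have hneg : (a k.+1 - a k < 0) -> Ev (L + N%:R + k.+1%:R) = set0.
    by move=> h; exfalso; lra.
  rewrite /g (integralZl_indic _ (fun _ => Ev (L + N%:R + k.+1%:R)) _ hneg (mEv _)) //.
  rewrite integral_indic ?setIT //; last exact: mEv.
  have [hl _] := tail_bounds (L + N%:R + k.+1%:R) ltac:(rewrite -addrA lerDl; apply: addr_ge0; exact: ler0n).
  apply: (le_trans _ (lee_pmul _ _ (lexx _) hl)); last 2 first.
  - by rewrite lee_fin.
  - by rewrite lee_fin mulr_ge0 ?expR_ge0 ?powR_ge0.
  rewrite -EFinM lee_fin /a -natr1 !addrA.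
  apply: termL => //.
  by rewrite natr1 ler_nat.
apply: (le_trans _ (_ : \sum_(0 <= k < N) ((Ac * expR (- gamma * ln s))%:E) <= _)%E); last first.
  rewrite big_nat_cond [X in (_ <= X)%E]big_nat_cond.
  by apply: lee_sum => k /andP[/andP[_ kN] _]; exact: hterm.
rewrite sumEFin lee_fin sumr_const_nat subn0 -mulr_natl.
have -> : expR (- (gamma + 1) * ln s) = expR (- gamma * ln s) * s^-1.
  have -> : s^-1 = expR (- ln s) by rewrite expRN lnK // posrE.
  by rewrite -expRD; congr expR; ring.
have Ac0 : 0 <= Ac * expR (- gamma * ln s).
  apply: mulr_ge0; last exact: expR_ge0.
  apply: mulr_ge0; last exact: expR_ge0.
  have : expR (-1) < 1 :> R by rewrite expR_lt1; lra.
  lra.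
rewrite mulrA mulrC; apply: ler_wpM2r => //; exact: ltW.
Qed.

Definition c1 := expR (- `|ln Ac| - (gamma + 1) * `|ln (b - 1)|).
Definition c2 := expR (`|ln Bc| + (gamma + 1)).

Lemma Ac_gt0 : 0 < Ac.
Proof.
apply: mulr_gt0; last exact: expR_gt0.
have : expR (-1) < 1 :> R by rewrite expR_lt1; lra.
lra.
Qed.

Lemma Bc_gt0 : 0 < Bc.
Proof.
apply: addr_gt0; first exact: expR_gt0.
apply: mulr_gt0; first exact: expR_gt0.
have := hb; lra.
Qed.


Lemma pnorm_bounds p : 1 <= p -> p < b -> exists x, pnorm P zeta p = x%:E /\
  c1 * psi b (gamma + 1) p <= x /\ x <= c2 * psi b (gamma + 1) p.
Proof.
move=> p1 pb; rewrite pnormE.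
have hU := @int_upper p p1 pb; have hL := @int_lower p p1 pb.
move: (\int[P]_w _)%E hU hL => I hU hL.
case: I hU hL => [r| |] hU hL.
- exists (r `^ p^-1); split; first by rewrite poweR_EFin.
  rewrite lee_fin in hU hL.
  exact: (@pow_bounds _ b gamma p Ac Bc r hb hg p1 pb Ac_gt0 Bc_gt0 hL hU).
- by move: hU; rewrite leye_eq.
- by move: hL; rewrite leeNy_eq.
Qed.

Lemma c1_gt0 : 0 < c1. Proof. exact: expR_gt0. Qed.
Lemma c2_gt0 : 0 < c2. Proof. exact: expR_gt0. Qed.

Lemma psi_gt0 dl p : p < b -> 0 < psi b dl p.
Proof. by move=> pb; rewrite /psi powR_gt0 // subr_gt0. Qed.

Lemma main_sec :
  (exists c1 c2 : R, 0 < c1 /\ 0 < c2 /\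
     forall p, 1 <= p -> p < b ->
       ((c1 * psi b (gamma + 1) p)%:E <= pnorm P zeta p)%E /\
       (pnorm P zeta p <= (c2 * psi b (gamma + 1) p)%:E)%E)
  /\ (GLSnorm P (psi b (gamma + 1)) b zeta < +oo)%E
  /\ GLSnorm P (psi b gamma) b zeta = +oo%E.
Proof.
split.
  exists c1, c2; split; first exact: c1_gt0.
  split; first exact: c2_gt0.
  move=> p p1 pb; have [x [-> [h1 h2]]] := @pnorm_bounds p p1 pb.
  by rewrite !lee_fin.
split.
  apply: (@le_lt_trans _ _ c2%:E); last exact: ltey.
  apply: ub_ereal_sup => y [p hp <-].
  move: hp; rewrite /= in_itv /= => /andP[p1 pb].
  have [x [-> [h1 h2]]] := @pnorm_bounds p p1 pb.
  have ps := @psi_gt0 (gamma + 1) p pb.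
  rewrite -EFinM lee_fin ler_pdivrMr //.
rewrite /GLSnorm.
set S := [set _ | _ in _].
have big : forall M : R, exists2 y, S y & (M%:E < y)%E.
  move=> M.
  set K := `|ln c1| + `|ln (b - 1) / b| + `|M| + 1.
  have K0 : 0 <= K.
    have := normr_ge0 (ln c1); have := normr_ge0 (ln (b - 1) / b); have := normr_ge0 M.
    rewrite /K; lra.
  have hb' := hb.
  have b0 : 0 < b by lra.
  set s := (b - 1) * expR (- b * K).
  have s0 : 0 < s by rewrite mulr_gt0 ?expR_gt0 // subr_gt0.
  have e1 : expR (- b * K) <= 1 by rewrite expR_le1 mulNr oppr_le0 mulr_ge0 // ltW.
  have sb : s <= b - 1.
    by rewrite /s -[X in _ <= X]mulr1 ler_wpM2l // subr_ge0 ltW.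
  have p1 : 1 <= b - s by lra.
  have pb : b - s < b by lra.
  have [x [hx [h1 h2]]] := @pnorm_bounds (b - s) p1 pb.
  have ps := @psi_gt0 gamma (b - s) pb.
  exists (pnorm P zeta (b - s) * ((psi b gamma (b - s))^-1)%:E)%E.
    by exists (b - s) => //=; rewrite in_itv /= p1 pb.
  rewrite hx -EFinM lte_fin ltr_pdivlMr //.
  apply: (lt_le_trans _ h1).
  have bs : b - (b - s) = s by ring.
  have ls : ln s = ln (b - 1) - b * K.
    by rewrite /s lnM ?posrE ?expR_gt0 ?subr_gt0 // expRK mulNr.
  rewrite /psi bs !powRE // ls /c1.
  set l1 := - `|ln Ac| - (gamma + 1) * `|ln (b - 1)|.
  have -> : expR l1 * expR (- ((gamma + 1) / b) * (ln (b - 1) - b * K)) =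
     expR (l1 + K - ln (b - 1) / b) * expR (- (gamma / b) * (ln (b - 1) - b * K)).
    by rewrite -!expRD; congr expR; field; rewrite gt_eqF.
  rewrite ltr_pM2r ?expR_gt0 //.
  have hl1 : ln c1 = l1 by rewrite /c1 expRK.
  have hk : M < l1 + K - ln (b - 1) / b.
    rewrite /K hl1.
    have := ler_norm M; have := ler_norm (- l1); rewrite normrN => h3 h4.
    have := ler_norm (ln (b - 1) / b) => h5.
    lra.
  apply: (lt_le_trans hk); apply: (le_trans _ (expR_ge1Dx _)); lra.
case E : (ereal_sup S) => [r| |] //.
  have [y Sy hy] := big (r + 1).
  have := ereal_sup_ubound Sy; rewrite E => h.
  have : ((r + 1)%:E < r%:E)%E by exact: (lt_le_trans hy h).
  by rewrite lte_fin -[X in _ < X]addr0 ltrD2l ltr10.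
have [y Sy hy] := big 0.
have := ereal_sup_ubound Sy; rewrite E leeNy_eq => /eqP h.
by move: hy; rewrite h.
Qed.
End Main.

Theorem mainTheorem2 (d : measure_display) (T : measurableType d)
  (R : realType) (P : probability T R) (zeta : {RV P >-> R})
  (b gamma x0 : R) (hb : 1 < b) (hg : 0 < gamma) (hx0 : expR 1 <= x0)
  (htail : forall x, x0 <= x ->
     tailfun P zeta x = (x `^ (- b) * ln x `^ gamma)%:E) :
  (exists c1 c2 : R, 0 < c1 /\ 0 < c2 /\
     forall p, 1 <= p -> p < b ->
       ((c1 * psi b (gamma + 1) p)%:E <= pnorm P zeta p)%E /\
       (pnorm P zeta p <= (c2 * psi b (gamma + 1) p)%:E)%E)
  /\ (GLSnorm P (psi b (gamma + 1)) b zeta < +oo)%E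
  /\ GLSnorm P (psi b gamma) b zeta = +oo%E.
Proof. exact: (@main_sec d T R P zeta b gamma x0 hb hg hx0 htail). Qed.
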